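(* Let $\mu,\gamma,\eta$ be vertices of $\Gamma$ and $\varphi_\eta=\varphi^{[\mu,\gamma]}_\eta$. Then $\varphi_\eta(\nu)\ge0$ for every vertex $\nu$, with $\varphi_\eta(\nu)>0$ if and only if $\nu\in\Gamma^\mu_\gamma$. If $\nu,\nu'\in[\mu,\gamma]$ and $d(\mu,\nu)<d(\mu,\nu')$, then $\varphi_\eta(\nu)<\varphi_\eta(\nu')$. Furthermore, if $\eta\in[\mu,\gamma]$, then $\varphi_\eta$ is constant on any path of $\Gamma$ meeting $[\mu,\gamma]$ in at most one vertex.
   Context: Setting: $R$ two-dimensional regular local ring with algebraically closed residue field; $\pi:X=X_{N+1}\to\cdots\to X_1=\operatorname{Spec}R$ a composition of point blowups; $E_\nu$ strict transforms of exceptional divisors; proximity matrix $P$ ($p_{\mu,\mu}=1$, $p_{\mu,\nu}=-1$ if $x_\mu$ lies on the strict transform on $X_\mu$ of the exceptional divisor of the blowup of $x_\nu$, else $0$), valuation matrix $V=(P^TP)^{-1}$ (symmetric, positive entries). Dual graph $\Gamma$ on vertices $1..N$, $\gamma\sim\eta$ iff $\gamma\ne\eta$ and $E_\gamma\cap E_\eta\neq\emptyset$ (a tree); $[\mu,\gamma]$ the path from $\mu$ to $\gamma$; $d$ the graph distance; branch $\Gamma^\mu_\gamma$ = maximal connected subgraph containing $\gamma$ but not $\mu$ ($\Gamma^\mu_\mu=\emptyset$). $\mathbf 1_i$ standard basis vector of $\mathbb Q^\Gamma$; $\rho_{[\alpha,\beta]}(\nu)=V_{\beta,\nu}/V_{\alpha,\nu}$;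 $\widehat r_{[\mu,\gamma]}=\mathbf 1_\gamma-\rho_{[\mu,\gamma]}(\mu)\mathbf 1_\mu$; $\varphi^{[\mu,\gamma]}_\eta(\nu)=(\widehat r_{[\mu,\gamma]}V)_\nu/V_{\eta,\nu}$. *)

(* Defs.v *)
(* Combinatorial model of a sequence of point blowups. *)
From HB Require Import structures.
From mathcomp Require Import all_boot all_order all_algebra.
Set Implicit Arguments. Unset Strict Implicit. Unset Printing Implicit Defensive.
Import Order.TTheory GRing.Theory Num.Theory.
Local Open Scope ring_scope.

(* Vertices / blown-up points are indexed 0..N-1 (paper: 1..N).
   [prox k i] means: the point x_k lies on the strict transform (on X_k) of
   the exceptional divisor of the blowup of x_i  (x_k is proximate to x_i). *)

(* Dual graph of the exceptional divisors after blowing up x_0..x_{k-1}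
   (vertices < k).  Blowing up x_k adds vertex k, joined to the divisors
   through x_k; if x_k is the intersection of two divisors, their edge
   disappears (they are separated). *)
Fixpoint adjk (prox : nat -> nat -> bool) (k : nat) (i j : nat) : bool :=
  match k with
  | 0 => false
  | k'.+1 =>
      if (i < k')%N && (j < k')%N then adjk prox k' i j && ~~ (prox k' i && prox k' j)
      else if (i == k') && (j < k')%N then prox k' j
      else if (j == k') && (i < k')%N then prox k' i
      else false
  end.

(* Proximity data realizable by a sequence of point blowups of Spec R:
   x_k is proximate only to earlier points; for k >= 1 the point x_k lies
   over the closed point, hence on one or two exceptional divisors, and if on
   two, it is their intersection point (they are adjacent). *)
Definition valid_prox (N : nat) (prox : nat -> nat -> bool) : Prop :=
  (forall k i, (k < N)%N -> prox k i -> (i < k)%N) /\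
  (forall k, (0 < k < N)%N ->
     (0 < count (prox k) (iota 0 k) <= 2)%N /\
     (forall i j, i != j -> prox k i -> prox k j -> adjk prox k i j)).

Definition proxmx (N : nat) (prox : nat -> nat -> bool) : 'M[rat]_N :=
  \matrix_(i < N, j < N)
     (if i == j then 1 else if prox i j then -1 else 0).

Definition valmx (N : nat) (prox : nat -> nat -> bool) : 'M[rat]_N :=
  invmx ((proxmx N prox)^T *m proxmx N prox).

Definition gadj (N : nat) (prox : nat -> nat -> bool) : rel 'I_N :=
  fun i j => adjk prox N i j.

Fixpoint reach (N : nat) (e : rel 'I_N) (n : nat) (i j : 'I_N) : bool :=
  match n with
  | 0 => i == j
  | n'.+1 => (i == j) || [exists k, e i k && reach e n' k j]
  end.

(* Graph distance d(i,j) (= N if unreachable, which never happens for a tree). *)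
Definition gdist (N : nat) (e : rel 'I_N) (i j : 'I_N) : nat :=
  find (fun n => reach e n i j) (iota 0 N).

(* Vertices on the (unique, since Gamma is a tree) path [a,b]. *)
Definition onpath (N : nat) (e : rel 'I_N) (a b v : 'I_N) : Prop :=
  exists p : seq 'I_N,
    [&& path e a p, last a p == b, uniq (a :: p) & v \in a :: p].

(* Branch Gamma^mu_gamma: the connected component of gamma in Gamma minus mu;
   empty if gamma = mu. *)
Definition branch (N : nat) (e : rel 'I_N) (mu g v : 'I_N) : bool :=
  (g != mu) && connect [rel x y | [&& e x y, x != mu & y != mu]] g v.

Definition rho (N : nat) (V : 'M[rat]_N) (a b nu : 'I_N) : rat := V b nu / V a nu.

Definition rhat (N : nat) (V : 'M[rat]_N) (mu g : 'I_N) : 'rV[rat]_N :=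
  \row_i ((i == g)%:R - rho V mu g mu * (i == mu)%:R).

Definition phi (N : nat) (V : 'M[rat]_N) (mu g eta nu : 'I_N) : rat :=
  (rhat V mu g *m V) 0 nu / V eta nu.

(* Main.v *)
Require Import Defs.
From HB Require Import structures.
From mathcomp Require Import all_boot all_order all_algebra.
Import Order.TTheory GRing.Theory Num.Theory.
Local Open Scope ring_scope.
From mathcomp Require Import zify ring lra.
Set Implicit Arguments. Unset Strict Implicit. Unset Printing Implicit Defensive.

Lemma adjk_lt prox k i j : adjk prox k i j -> (i < k)%N /\ (j < k)%N.
Proof.
elim: k i j => [|k IH] i j //=.
case: ifP => [/andP[h1 h2] _|_]; first by split; lia.
case: ifP => [/andP[/eqP-> h2] _|_]; first by split; lia.
case: ifP => [/andP[/eqP-> h2] _|_]; first by split; lia.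
by [].
Qed.

Lemma adjk_sym prox k i j : adjk prox k i j = adjk prox k j i.
Proof.
elim: k i j => [|k IH] i j //=.
case: (ltngtP i k) => hi; case: (ltngtP j k) => hj //=.
by rewrite IH (andbC (prox k i)).
Qed.

Lemma adjk_irr prox k i : adjk prox k i i = false.
Proof.
elim: k => [|k IH] //=; rewrite IH /=.
case: (ltngtP i k) => hi //=.
Qed.

Definition avoid (T : finType) (e : rel T) (a : T) : rel T :=
  [rel x y | [&& e x y, x != a & y != a]].
Definition rme (T : finType) (e : rel T) (x y : T) : rel T :=
  [rel u v | e u v && ~~ (((u == x) && (v == y)) || ((u == y) && (v == x)))].

Lemma connect_lift (T : finType) (r r' : rel T) (pi : T -> T) :
  (forall u v, r u v -> connect r' (pi u) (pi v)) ->
  forall x y, connect r x y -> connect r' (pi x) (pi y).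
Proof.
move=> H x y /connectP[p]; elim: p x => [|z p IH] x /=; first by move=> _ ->.
move=> /andP[hxz hp] hy; apply: connect_trans (H _ _ hxz) (IH _ hp hy).
Qed.

Lemma connect_stuck (T : finType) (r : rel T) x y :
  (forall v, ~~ r x v) -> connect r x y -> y = x.
Proof.
move=> H /connectP[[|z p] /=]; first by move=> _ ->.
by move=> /andP[h _]; move: (H z); rewrite h.
Qed.

Definition ek N prox K : rel 'I_N := fun x y => adjk prox K x y.

Definition Einv N prox K := forall x y : 'I_N,
  ek prox K x y -> ~~ connect (rme (ek prox K) x y) x y.

Lemma valid_lt N prox : valid_prox N prox -> forall k i, (k < N)%N -> prox k i -> (i < k)%N.
Proof. by case. Qed.

Lemma valid_adj N prox : valid_prox N prox -> forall k (i j : nat), (k < N)%N ->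
  i != j -> prox k i -> prox k j -> adjk prox k i j.
Proof.
case=> h1 h2 k i j hk hij hi hj.
have ik := h1 _ _ hk hi.
have [_ H] := h2 k (ltac:(apply/andP; split => //; lia)); exact: H.
Qed.

Lemma rme_sym (T : finType) (e : rel T) x y u v : rme e x y u v = rme e y x u v.
Proof. by rewrite /rme /= orbC. Qed.

Lemma ekS_old N prox K (u v : 'I_N) : ek prox K.+1 u v -> (u < K)%N -> (v < K)%N ->
  ek prox K u v && ~~ (prox K u && prox K v).
Proof. by move=> h hu hv; move: h; rewrite /ek /= hu hv. Qed.

Lemma ek_sym N prox K : symmetric (ek (N:=N) prox K).
Proof. by move=> x y; rewrite /ek adjk_sym. Qed.

Lemma rme_symmetric (T : finType) (e : rel T) x y : symmetric e -> symmetric (rme e x y).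
Proof.
move=> se u v; rewrite /rme /= se orbC.
by rewrite [(u == x) && _]andbC [(u == y) && _]andbC.
Qed.

Lemma connect_rme_swap (T : finType) (e : rel T) x y : symmetric e ->
  connect (rme e x y) x y -> connect (rme e y x) y x.
Proof.
move=> se h; rewrite (sym_connect_sym (rme_symmetric _ _ se)).
by rewrite (eq_connect (e' := rme e x y)) // => u v; rewrite rme_sym.
Qed.

Lemma ekS_cases N prox K (u v : 'I_N) : ek prox K.+1 u v ->
  [/\ (u < K)%N, (v < K)%N, ek prox K u v & ~~ (prox K u && prox K v)] \/
  ((u : nat) = K /\ (v < K)%N /\ prox K v) \/
  ((v : nat) = K /\ (u < K)%N /\ prox K u).
Proof.
rewrite /ek /=.
case: (ltngtP u K) => hu; case: (ltngtP v K) => hv //=;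
  rewrite ?andbF ?andbT //= => h.
- by case/andP: h => h1 h2; left; split.
- by right; right; split.
- by right; left; split.
Qed.

Lemma Einv_stepB N prox K : valid_prox N prox -> (K < N)%N -> Einv N prox K ->
  forall x y : 'I_N, (x : nat) = K -> ek prox K.+1 x y ->
  ~~ connect (rme (ek prox K.+1) x y) x y.
Proof.
move=> Hv KN EK x y xK exy; apply/negP => hc.
have [yK pKy] : (y < K)%N /\ prox K y.
  case: (ekS_cases exy) => [[]|[[_ []]|[_ []]]] //; lia.
case: (pickP (fun j : 'I_N => prox K j && (j != y))) => [j /andP[pKj jy]|hnone].
- pose pi (v : 'I_N) := if (v : nat) == K then j else v.
  have ejy : ek prox K j y.
    by apply: (valid_adj Hv) => //; apply: contra jy => /eqP h; apply/eqP/val_inj.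
  have H : forall u v, rme (ek prox K.+1) x y u v ->
      connect (rme (ek prox K) j y) (pi u) (pi v).
    move=> u v /andP[huv hn].
    case: (ekS_cases huv) => [[hu hv euv hb]|[[hu [hv pv]]|[hv [hu pu]]]].
    + have e1 : ((u : nat) == K) = false by apply: ltn_eqF; assumption.
      have e2 : ((v : nat) == K) = false by apply: ltn_eqF; assumption.
      rewrite /pi e1 e2.
      apply: connect1; rewrite /rme /= euv /=; apply: contra hb.
      by case/orP=> /andP[/eqP-> /eqP->]; rewrite ?pKj ?pKy.
    + have ux : u = x by apply: ord_inj; rewrite hu xK.
      have vy : v != y by move: hn; rewrite ux eqxx /= negb_or => /andP[/negbTE-> _].
      have e2 : ((v : nat) == K) = false by apply: ltn_eqF; assumption.
      rewrite /pi hu eqxx e2.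
      case: (eqVneq j v) => [->|jv]; first exact: connect0.
      apply: connect1; rewrite /rme /= (negbTE vy) (negbTE jy) ?andbF ?andbT ?orbF /=.
      by apply: (valid_adj Hv) => //; apply: contra jv => /eqP h; apply/eqP/val_inj.
    + have vx : v = x by apply: ord_inj; rewrite hv xK.
      have uy : u != y by move: hn; rewrite vx eqxx /= andbT negb_or => /andP[_ /negbTE->].
      have e1 : ((u : nat) == K) = false by apply: ltn_eqF; assumption.
      rewrite /pi hv eqxx e1.
      case: (eqVneq u j) => [->|uj]; first exact: connect0.
      apply: connect1; rewrite /rme /= (negbTE uy) (negbTE jy) ?andbF ?andbT ?orbF /=.
      by apply: (valid_adj Hv) => //; apply: contra uj => /eqP h; apply/eqP/val_inj.
  have e2 : ((y : nat) == K) = false by apply: ltn_eqF; assumption.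
  have := connect_lift H hc; rewrite /pi xK eqxx e2.
  by move=> hc'; move: (EK _ _ ejy); rewrite hc'.
- have hst : forall v, ~~ rme (ek prox K.+1) x y x v; last first.
    by have yx := connect_stuck hst hc; move: yK; rewrite yx xK ltnn.
  move=> v; apply/negP => /andP[hxv hn].
  case: (ekS_cases hxv) => [[]|[[_ [hv pv]]|[hv [hu _]]]]; try lia.
  have vy : v != y by move: hn; rewrite eqxx /= negb_or => /andP[/negbTE-> _].
  by move: (hnone v); rewrite pv vy.
Qed.

Lemma Einv_step N prox K : valid_prox N prox -> (K < N)%N -> Einv N prox K ->
  Einv N prox K.+1.
Proof.
move=> Hv KN EK x y exy.
case: (eqVneq (x : nat) K) => [xK|xK]; first exact: Einv_stepB.
case: (eqVneq (y : nat) K) => [yK|yK].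
  apply/negP => /(connect_rme_swap (@ek_sym _ _ _)) hc.
  have eyx : ek prox K.+1 y x by rewrite ek_sym.
  by move: (Einv_stepB Hv KN EK yK eyx); rewrite hc.
have [xK' yK' ek' hb] : [/\ (x < K)%N, (y < K)%N, ek prox K x y & ~~ (prox K x && prox K y)].
  case: (ekS_cases exy) => [//|[[]|[]]] h; [by move: xK; rewrite h eqxx | by move: yK; rewrite h eqxx].
apply/negP => hc.
pose pi (v : 'I_N) := if (v : nat) == K then odflt v [pick i : 'I_N | prox K i] else v.
have H : forall u v, rme (ek prox K.+1) x y u v ->
    connect (rme (ek prox K) x y) (pi u) (pi v).
  move=> u v /andP[huv hn].
  case: (ekS_cases huv) => [[hu hv euv hb']|[[hu [hv pv]]|[hv [hu pu]]]].
  + have e1 : ((u : nat) == K) = false by apply: ltn_eqF; assumption.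
    have e2 : ((v : nat) == K) = false by apply: ltn_eqF; assumption.
    rewrite /pi e1 e2.
    by apply: connect1; rewrite /rme /= euv.
  + have e2 : ((v : nat) == K) = false by apply: ltn_eqF; assumption.
    rewrite /pi hu eqxx e2.
    case: pickP => [i pi_ /=|hnone]; last by move: (hnone v); rewrite pv.
    case: (eqVneq i v) => [->|iv]; first exact: connect0.
    have iv' : (i : nat) != v by apply: contra iv => /eqP h; apply/eqP/val_inj.
    have ekiv := valid_adj Hv KN iv' pi_ pv.
    apply: connect1; rewrite /rme /ek /= ekiv /=.
    apply: contra hb => /orP[]/andP[/eqP<- /eqP<-]; by rewrite ?pi_ ?pv.
  + have e1 : ((u : nat) == K) = false by apply: ltn_eqF; assumption.
    rewrite /pi hv eqxx e1.
    case: pickP => [i pi_ /=|hnone]; last by move: (hnone u); rewrite pu.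
    case: (eqVneq u i) => [->|ui]; first exact: connect0.
    have ui' : (u : nat) != i by apply: contra ui => /eqP h; apply/eqP/val_inj.
    have ekui := valid_adj Hv KN ui' pu pi_.
    apply: connect1; rewrite /rme /ek /= ekui /=.
    apply: contra hb => /orP[]/andP[/eqP<- /eqP<-]; by rewrite ?pi_ ?pu.
have e1 : ((x : nat) == K) = false by apply: ltn_eqF; assumption.
have e2 : ((y : nat) == K) = false by apply: ltn_eqF; assumption.
have := connect_lift H hc; rewrite /pi e1 e2.
by move=> hc'; move: (EK _ _ ek'); rewrite hc'.
Qed.

Lemma Einv_all N prox : valid_prox N prox -> forall K, (K <= N)%N -> Einv N prox K.
Proof.
move=> Hv; elim=> [|K IH] hK.
  by move=> x y; rewrite /ek /=.
apply: Einv_step => //; apply: IH; lia.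
Qed.

Definition pe (prox : nat -> nat -> bool) (k x : nat) : rat :=
  if k == x then 1 else if prox k x then -1 else 0.

Lemma pe_gt N prox : valid_prox N prox -> forall k x, (k < N)%N -> (k < x)%N -> pe prox k x = 0.
Proof.
move=> Hv k x kN kx; have e1 : (k == x) = false by apply/eqP; lia.
rewrite /pe e1.
case: ifP => // h; have := valid_lt Hv kN h; lia.
Qed.

Lemma sum_pe N prox : valid_prox N prox -> forall K x y, (K <= N)%N -> x != y ->
  \sum_(k < K) pe prox k x * pe prox k y = - (adjk prox K x y)%:R.
Proof.
move=> Hv; elim=> [|K IH] x y hK xy; first by rewrite big_ord0 /= oppr0.
rewrite big_ord_recr /= IH //; last lia.
have KN : (K < N)%N by lia.
case: (ltngtP x K) => hx; case: (ltngtP y K) => hy /=.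
- have e1 : (K == x) = false by apply/eqP; lia.
  have e2 : (K == y) = false by apply/eqP; lia.
  rewrite /pe e1 e2.
  case px: (prox K x); case py: (prox K y) => /=; rewrite ?andbF ?andbT ?mulr0 ?mul0r ?addr0 //.
  by rewrite (valid_adj Hv) //= mulrNN mulr1 addNr.
- by rewrite (pe_gt Hv KN hy) mulr0 addr0 (negbTE (_ : ~~ adjk prox K x y)) //;
    apply/negP => /adjk_lt; lia.
- have hyK : y = K by [].
  have e1 : (K == x) = false by apply/eqP; lia.
  rewrite /pe e1.
  rewrite hyK eqxx mulr1 (negbTE (_ : ~~ adjk prox K x K)); last by apply/negP => /adjk_lt; lia.
  by case: (prox K x); rewrite /= ?oppr0 ?add0r.
- by rewrite (pe_gt Hv KN hx) mul0r addr0 (negbTE (_ : ~~ adjk prox K x y)) //;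
    apply/negP => /adjk_lt; lia.
- by rewrite (pe_gt Hv KN hx) mul0r addr0 (negbTE (_ : ~~ adjk prox K x y)) //;
    apply/negP => /adjk_lt; lia.
- by rewrite (pe_gt Hv KN hx) mul0r addr0 (negbTE (_ : ~~ adjk prox K x y)) //;
    apply/negP => /adjk_lt; lia.
- have hxK : x = K by [].
  have e1 : (K == y) = false by apply/eqP; lia.
  rewrite /pe e1.
  rewrite hxK eqxx mul1r (negbTE (_ : ~~ adjk prox K K y)); last by apply/negP => /adjk_lt; lia.
  by case: (prox K y); rewrite /= ?oppr0 ?add0r ?ltnn.
- by rewrite (pe_gt Hv KN hy) mulr0 addr0 (negbTE (_ : ~~ adjk prox K x y)) //;
    apply/negP => /adjk_lt; lia.
- subst; by rewrite eqxx in xy.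
Qed.

Definition Amx N prox : 'M[rat]_N := (proxmx N prox)^T *m proxmx N prox.

Lemma proxmx_pe N prox (i j : 'I_N) : proxmx N prox i j = pe prox i j.
Proof. by rewrite /proxmx mxE /pe. Qed.

Lemma Amx_entry N prox (x y : 'I_N) :
  Amx N prox x y = \sum_(k < N) pe prox k x * pe prox k y.
Proof. by rewrite /Amx mxE; apply: eq_bigr => k _; rewrite mxE !proxmx_pe. Qed.

Lemma Amx_off N prox : valid_prox N prox -> forall x y : 'I_N, x != y ->
  Amx N prox x y = - (gadj prox x y)%:R.
Proof. by move=> Hv x y xy; rewrite Amx_entry (sum_pe Hv). Qed.

Lemma Amx_sym N prox : (Amx N prox)^T = Amx N prox.
Proof. by rewrite /Amx trmx_mul trmxK. Qed.

Lemma proxmx_unit N prox : valid_prox N prox -> proxmx N prox \in unitmx.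
Proof.
move=> Hv; rewrite unitmxE det_trig.
  rewrite (eq_bigr (fun _ => 1)); first by rewrite prodr_const expr1n unitr1.
  by move=> i _; rewrite proxmx_pe /pe eqxx.
apply/is_trig_mxP => i j ij; have e1 : ((i : nat) == j) = false by apply/eqP; lia.
rewrite proxmx_pe /pe e1.
case: ifP => // h; have := valid_lt Hv (ltn_ord i) h; lia.
Qed.

Lemma Amx_unit N prox : valid_prox N prox -> Amx N prox \in unitmx.
Proof. by move=> Hv; rewrite unitmx_mul unitmx_tr proxmx_unit. Qed.

Lemma valmx_Amx N prox : valid_prox N prox -> valmx N prox *m Amx N prox = 1%:M.
Proof. by move=> Hv; rewrite /valmx mulVmx // Amx_unit. Qed.

Definition Qmx N prox : 'M[rat]_N := invmx (proxmx N prox).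

Lemma Q_rec N prox : valid_prox N prox -> forall k j : 'I_N,
  Qmx N prox k j = (k == j)%:R + \sum_(i | i != k) (prox k i)%:R * Qmx N prox i j.
Proof.
move=> Hv k j; rewrite /Qmx.
have := congr1 (fun M : 'M[rat]_N => M k j) (mulmxV (proxmx_unit Hv)).
rewrite !mxE (bigD1 k) //= proxmx_pe /pe eqxx mul1r => <-.
have -> : \sum_(i | i != k) proxmx N prox k i * invmx (proxmx N prox) i j =
   - \sum_(i | i != k) (prox k i)%:R * invmx (proxmx N prox) i j.
  rewrite -sumrN; apply: eq_bigr => i ik; have e1 : ((k : nat) == i) = false.
    by apply/negbTE; apply: contra ik => /eqP h; apply/eqP/val_inj.
  rewrite proxmx_pe /pe e1.
  by case: (prox k i); rewrite /= ?mulN1r ?mul1r ?mul0r ?oppr0.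
by rewrite addrNK.
Qed.

Lemma Q_pos N prox : valid_prox N prox -> forall j0 : 'I_N, (j0 : nat) = 0%N ->
  forall k : 'I_N, (forall j, 0 <= Qmx N prox k j) /\ 0 < Qmx N prox k j0.
Proof.
move=> Hv j0 hj0.
suff H : forall n (k : 'I_N), (k < n)%N ->
  (forall j, 0 <= Qmx N prox k j) /\ 0 < Qmx N prox k j0.
  by move=> k; apply: (H N).
elim=> [|n IH] k // kn.
have Hsum : forall j, 0 <= \sum_(i | i != k) (prox k i)%:R * Qmx N prox i j.
  move=> j; apply: sumr_ge0 => i _; case pki: (prox k i); last by rewrite mul0r.
  rewrite mul1r; have := valid_lt Hv (ltn_ord k) pki => ik.
  by have [H _] := IH i ltac:(lia); apply: H.
split.
  move=> j; rewrite Q_rec //; apply: addr_ge0 => //; exact: ler0n.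
rewrite Q_rec //.
case: (eqVneq k j0) => [kj|kj0].
  have -> : (true%:R : rat) = 1 by [].
  by have := Hsum j0; lra.
have -> : (false%:R : rat) = 0 by []. rewrite add0r.
have k0 : (0 < k)%N.
  case: (posnP k) => // h; case/eqP: kj0; apply: ord_inj; by rewrite h hj0.
have [Hlt Hc] := Hv.
have k0N : (0 < k < N)%N by rewrite k0 ltn_ord.
have [/andP[c0 _] _] := Hc k k0N.
move: c0; rewrite -has_count => /hasP[i0 ii0 pki0].
have i0N : (i0 < N)%N by move: ii0; rewrite mem_iota; lia.
pose i := Ordinal i0N.
have ik : i != k by apply/eqP => h; move: ii0; rewrite mem_iota -h /=; lia.
rewrite (bigD1 i) //= pki0 mul1r.
apply: ltr_pwDl.
  by have [_ H] := IH i ltac:(move: ii0; rewrite mem_iota /=; lia).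
apply: sumr_ge0 => i' /andP[_ _]; case pki: (prox k i'); last by rewrite mul0r.
rewrite mul1r; have := Hlt _ _ (ltn_ord k) pki => i'k.
by have [H _] := IH i' ltac:(lia); apply: H.
Qed.

Lemma valmx_QQ N prox : valid_prox N prox ->
  valmx N prox = Qmx N prox *m (Qmx N prox)^T.
Proof.
move=> Hv.
have hX : Qmx N prox *m (Qmx N prox)^T *m Amx N prox = 1%:M.
  rewrite /Amx -!mulmxA (mulmxA (Qmx N prox)^T) -trmx_mul /Qmx mulmxV ?proxmx_unit //.
  by rewrite trmx1 mul1mx mulVmx ?proxmx_unit.
rewrite /valmx -[RHS](mulmxK (Amx_unit Hv)) hX mul1mx //.
Qed.

Lemma Vpos N prox : valid_prox N prox -> forall x y : 'I_N, 0 < valmx N prox x y.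
Proof.
move=> Hv x y.
have h0 : (0 < N)%N by apply: leq_ltn_trans (ltn_ord x).
pose j0 := Ordinal h0.
rewrite (valmx_QQ Hv) mxE (bigD1 j0) //= mxE.
apply: ltr_pwDl.
  by apply: mulr_gt0; [have [_ ] := Q_pos Hv (erefl : (j0 : nat) = 0%N) x
                      | have [_ ] := Q_pos Hv (erefl : (j0 : nat) = 0%N) y].
apply: sumr_ge0 => k _; rewrite mxE; apply: mulr_ge0.
  by have [H _] := Q_pos Hv (erefl : (j0 : nat) = 0%N) x.
by have [H _] := Q_pos Hv (erefl : (j0 : nat) = 0%N) y.
Qed.

Lemma Amx_off_le0 N prox : valid_prox N prox -> forall x y : 'I_N, x != y -> Amx N prox x y <= 0.
Proof.
move=> Hv x y xy; rewrite (Amx_off Hv xy) oppr_le0; exact: ler0n.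
Qed.

Lemma Amx_nz_adj N prox : valid_prox N prox -> forall x y : 'I_N, x != y ->
  Amx N prox x y != 0 -> gadj prox x y.
Proof.
move=> Hv x y xy; rewrite (Amx_off Hv xy); by case: (gadj prox x y); rewrite ?oppr0 ?eqxx.
Qed.

Lemma Amx_adj N prox : valid_prox N prox -> forall x y : 'I_N,
  gadj prox x y -> Amx N prox x y = -1.
Proof.
move=> Hv x y h; have xy : x != y by apply: contraTneq h => ->; rewrite /gadj adjk_irr.
by rewrite (Amx_off Hv xy) h.
Qed.

Lemma PD N prox : valid_prox N prox -> forall n : 'rV[rat]_N,
  \sum_v n 0 v * (n *m Amx N prox) 0 v <= 0 -> n = 0.
Proof.
move=> Hv n hle.
set P := proxmx N prox.
set m := n *m P^T.
have E : \sum_v n 0 v * (n *m Amx N prox) 0 v = \sum_t m 0 t * m 0 t.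
  transitivity ((n *m Amx N prox *m n^T) 0 0).
    by rewrite mxE; apply: eq_bigr => v _; rewrite [n^T _ _]mxE mulrC.
  have -> : n *m Amx N prox *m n^T = m *m m^T.
    by rewrite /Amx /m trmx_mul trmxK !mulmxA.
  by rewrite mxE; apply: eq_bigr => t _; rewrite [m^T _ _]mxE.
have hge : forall t : 'I_N, true -> 0 <= m 0 t * m 0 t.
  by move=> t _; rewrite -expr2 sqr_ge0.
have h0 : \sum_t m 0 t * m 0 t = 0.
  apply/eqP; rewrite eq_le -E hle /= E; exact: sumr_ge0.
have m0 : m = 0.
  apply/matrixP => i t; rewrite (ord1 i) [in RHS]mxE.
  by have /eqP := psumr_eq0P hge h0 (i := t) erefl; rewrite mulf_eq0 orbb => /eqP.
have PTu : P^T \in unitmx by rewrite unitmx_tr proxmx_unit.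
by rewrite -[n](mulmxK PTu) -/m m0 mul0mx.
Qed.

Lemma MP N prox : valid_prox N prox -> forall (S : pred 'I_N) (u : 'rV[rat]_N),
  (forall t, S t -> 0 <= (u *m Amx N prox) 0 t) ->
  (forall t z, S t -> ~~ S z -> Amx N prox z t != 0 -> 0 <= u 0 z) ->
  forall t, S t -> 0 <= u 0 t.
Proof.
move=> Hv S u H1 H2.
set A := Amx N prox.
pose n : 'rV[rat]_N := \row_v (if S v && (u 0 v < 0) then u 0 v else 0).
pose r := u - n.
have nE v : n 0 v = if S v && (u 0 v < 0) then u 0 v else 0 by rewrite mxE.
have rE v : r 0 v = if S v && (u 0 v < 0) then 0 else u 0 v.
  by rewrite !mxE; case: ifP; rewrite ?subrr ?subr0.
have hn : n = u - r by rewrite /r opprB addrC addrNK.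
have key : \sum_v n 0 v * (n *m A) 0 v <= 0.
  have -> : \sum_v n 0 v * (n *m A) 0 v =
      \sum_v n 0 v * (u *m A) 0 v - \sum_v \sum_z n 0 v * (r 0 z * A z v).
    rewrite -sumrB; apply: eq_bigr => v _.
    have hsub : forall X Y : 'rV[rat]_N, (X - Y) 0 v = X 0 v - Y 0 v by move=> X Y; rewrite !mxE.
    rewrite {2}hn mulmxBl hsub mulrBr; congr (_ - _).
    have hmul : forall X : 'rV[rat]_N, (X *m A) 0 v = \sum_z X 0 z * A z v by move=> X; rewrite !mxE.
    by rewrite hmul big_distrr.
  rewrite subr_le0; apply: (@le_trans _ _ 0).
    apply: sumr_le0 => v _; rewrite nE; case: ifP => [/andP[Sv uv]|_]; last by rewrite mul0r.
    by apply: mulr_le0_ge0; [exact: ltW | exact: H1].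
  apply: sumr_ge0 => v _; apply: sumr_ge0 => z _.
  rewrite nE; case: ifP => [/andP[Sv uv]|_]; last by rewrite mul0r.
  apply: mulr_le0; first exact: ltW.
  case: (eqVneq z v) => [->|zv].
    by rewrite rE Sv uv mul0r.
  have Azv : A z v <= 0 by apply: (Amx_off_le0 Hv).
  case: (eqVneq (A z v) 0) => [->|Anz]; first by rewrite mulr0.
  apply: mulr_ge0_le0 => //; rewrite rE.
  case: ifP => // /negbT; rewrite negb_and => /orP[Sz|].
    exact: H2 Sv Sz Anz.
  by rewrite -leNgt.
have n0 := PD Hv key.
move=> t St; have := congr1 (fun M : 'rV[rat]_N => M 0 t) n0.
rewrite nE [in RHS]mxE St /=; case: ifP => [ut h|/negbT]; last by rewrite leNgt.
by move: ut; rewrite h ltxx.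
Qed.

Lemma UQ N prox : valid_prox N prox -> forall (S : pred 'I_N) (u : 'rV[rat]_N),
  (forall t, S t -> (u *m Amx N prox) 0 t = 0) ->
  (forall t z, S t -> ~~ S z -> Amx N prox z t != 0 -> u 0 z = 0) ->
  forall t, S t -> u 0 t = 0.
Proof.
move=> Hv S u H1 H2 t St; apply/eqP; rewrite eq_le; apply/andP; split; last first.
  by apply: (MP Hv _ _ St) => [t' St'|t' z St' Sz Az]; rewrite ?H1 ?(H2 t' z).
have := MP Hv (u := - u) _ _ St.
rewrite mxE oppr_ge0; apply.
  by move=> t' St'; rewrite mulNmx mxE H1 ?oppr0.
by move=> t' z St' Sz Az; rewrite mxE (H2 t' z) ?oppr0.
Qed.

Lemma gadj_sym N prox : symmetric (@gadj N prox).
Proof. exact: ek_sym. Qed.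

Lemma gadj_irr N prox (x : 'I_N) : gadj prox x x = false.
Proof. by rewrite /gadj adjk_irr. Qed.

Lemma SP N prox : valid_prox N prox -> forall (u : 'rV[rat]_N) v,
  u 0 v = 0 -> (forall z, Amx N prox z v != 0 -> 0 <= u 0 z) ->
  0 <= (u *m Amx N prox) 0 v ->
  (u *m Amx N prox) 0 v = 0 /\ (forall z, gadj prox z v -> u 0 z = 0).
Proof.
move=> Hv u v uv Hz hge.
have E : (u *m Amx N prox) 0 v = \sum_(z | z != v) u 0 z * Amx N prox z v.
  by rewrite mxE (bigD1 v) //= uv mul0r add0r.
have hle : forall z, z != v -> u 0 z * Amx N prox z v <= 0.
  move=> z zv; case: (eqVneq (Amx N prox z v) 0) => [->|nz]; first by rewrite mulr0.
  by apply: mulr_ge0_le0; [exact: Hz | exact: Amx_off_le0].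
have h0 : \sum_(z | z != v) - (u 0 z * Amx N prox z v) = 0.
  rewrite sumrN -E; apply/eqP; rewrite oppr_eq0 eq_le hge andbT.
  by rewrite E; apply: sumr_le0.
split.
  by apply/eqP; rewrite eq_le hge andbT E; apply: sumr_le0.
move=> z hz.
have zv : z != v by apply: contraTneq hz => ->; rewrite gadj_irr.
have hge' : forall z', z' != v -> 0 <= - (u 0 z' * Amx N prox z' v).
  by move=> z' zv'; rewrite oppr_ge0; exact: hle.
have /eqP := psumr_eq0P hge' h0 zv.
rewrite oppr_eq0 (Amx_adj Hv hz) mulrN1 oppr_eq0 => /eqP //.
Qed.

Lemma GP N prox : valid_prox N prox -> forall (S : pred 'I_N) (u : 'rV[rat]_N) (r : rel 'I_N),
  (forall t, S t -> 0 <= (u *m Amx N prox) 0 t) ->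
  (forall t z, S t -> Amx N prox z t != 0 -> 0 <= u 0 z) ->
  (forall a b, r a b -> gadj prox a b) ->
  forall x p, path r x p -> (forall y, y \in x :: p -> S y) -> u 0 x = 0 ->
  u 0 (last x p) = 0 /\ (u *m Amx N prox) 0 (last x p) = 0.
Proof.
move=> Hv S u r H1 H2 Hr x p; elim: p x => [|y p IH] x /=.
  move=> _ HS ux; split => //.
  have Sx : S x by apply: HS; rewrite inE eqxx.
  by have [] := SP Hv ux (H2 x ^~ Sx) (H1 x Sx).
move=> /andP[rxy hp] HS ux.
have Sx : S x by apply: HS; rewrite inE eqxx.
have [_ hz] := SP Hv ux (H2 x ^~ Sx) (H1 x Sx).
apply: IH => //.
  by move=> z hz'; apply: HS; rewrite inE hz' orbT.
by apply: hz; rewrite gadj_sym; apply: Hr.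
Qed.

Lemma conn_avoid_end (T : finType) (e : rel T) a x : connect (avoid e a) x a -> x = a.
Proof.
move=> /connectP[p]; elim: p x => [|y p IH] x /=; first by [].
move=> /andP[/andP[_ /andP[_ ya]] hp] hl.
by move: ya; rewrite (IH y hp hl) eqxx.
Qed.

Definition wv N prox (mu g : 'I_N) : 'rV[rat]_N := rhat (valmx N prox) mu g *m valmx N prox.

Lemma wv_A N prox : valid_prox N prox -> forall mu g t : 'I_N,
  (wv prox mu g *m Amx N prox) 0 t = (t == g)%:R - rho (valmx N prox) mu g mu * (t == mu)%:R.
Proof. by move=> Hv mu g t; rewrite /wv -mulmxA valmx_Amx // mulmx1 mxE. Qed.

Lemma vrow_A N prox : valid_prox N prox -> forall eta t : 'I_N,
  (row eta (valmx N prox) *m Amx N prox) 0 t = (eta == t)%:R.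
Proof. by move=> Hv eta t; rewrite -row_mul valmx_Amx // !mxE. Qed.

Lemma sum_delta N (g : 'I_N) (F : 'I_N -> rat) : \sum_i (i == g)%:R * F i = F g.
Proof.
rewrite (bigD1 g) //= eqxx mul1r big1 ?addr0 // => i ig.
by rewrite (negbTE ig) mul0r.
Qed.

Lemma wv_E N prox (mu g nu : 'I_N) :
  wv prox mu g 0 nu = valmx N prox g nu - rho (valmx N prox) mu g mu * valmx N prox mu nu.
Proof.
rewrite /wv mxE.
under eq_bigr => i _ do rewrite mxE mulrBl -mulrA.
by rewrite sumrB -mulr_sumr !sum_delta.
Qed.

Lemma wv_mu N prox : valid_prox N prox -> forall mu g : 'I_N, wv prox mu g 0 mu = 0.
Proof.
move=> Hv mu g; rewrite wv_E /rho divfK ?subrr //.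
by apply: lt0r_neq0; apply: Vpos.
Qed.

Lemma rho_pos N prox : valid_prox N prox -> forall mu g : 'I_N, 0 < rho (valmx N prox) mu g mu.
Proof. by move=> Hv mu g; rewrite /rho divr_gt0 // Vpos. Qed.

Lemma branchE N prox (mu g v : 'I_N) :
  branch (gadj prox) mu g v = (g != mu) && connect (avoid (gadj prox) mu) g v.
Proof. by []. Qed.

Lemma branch_neq N prox (mu g v : 'I_N) : branch (gadj prox) mu g v -> v != mu.
Proof.
rewrite branchE => /andP[gm hc]; apply/eqP => vm; rewrite vm in hc.
by move: gm; rewrite (conn_avoid_end hc) eqxx.
Qed.

Lemma wv_off N prox : valid_prox N prox -> forall mu g t : 'I_N,
  ~~ branch (gadj prox) mu g t -> wv prox mu g 0 t = 0.
Proof.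
move=> Hv mu g t nb.
case: (eqVneq t mu) => [->|tm]; first exact: wv_mu.
pose S := [pred v | (v != mu) && ~~ branch (gadj prox) mu g v].
apply: (UQ Hv (S := S)); last by rewrite /S /= tm.
  move=> t' /andP[t'm nb']; rewrite wv_A // (negbTE t'm) mulr0 subr0.
  case: (eqVneq t' g) => [tg|//]; rewrite tg in nb'.
  case: (eqVneq g mu) => [gm|gm]; first by move: t'm; rewrite tg gm eqxx.
  by move: nb'; rewrite branchE gm connect0.
move=> t' z /andP[t'm nb'] Sz Az.
case: (eqVneq z mu) => [->|zm]; first exact: wv_mu.
have bz : branch (gadj prox) mu g z by move: Sz; rewrite /S /= zm /= negbK.
have zt : z != t' by apply: contraNneq nb' => <-.
have ezt := Amx_nz_adj Hv zt Az.
move: nb'; rewrite branchE; move: bz; rewrite branchE => /andP[-> hc] /=.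
rewrite (connect_trans hc) //; apply: connect1; by rewrite /avoid /= ezt zm t'm.
Qed.

Lemma wv_ge0 N prox : valid_prox N prox -> forall mu g t : 'I_N, 0 <= wv prox mu g 0 t.
Proof.
move=> Hv mu g t.
case bt: (branch (gadj prox) mu g t); last by rewrite wv_off ?bt.
apply: (MP Hv (S := branch (gadj prox) mu g)) bt.
  move=> t' bt'; rewrite wv_A // (negbTE (branch_neq bt')) mulr0 subr0; exact: ler0n.
by move=> t' z _ bz _; rewrite wv_off.
Qed.

Lemma avoid_sym N prox (a : 'I_N) : symmetric (avoid (gadj prox) a).
Proof. by move=> x y; rewrite /avoid /= gadj_sym (andbC (x != a)). Qed.

Lemma wv_pos N prox : valid_prox N prox -> forall mu g t : 'I_N,
  branch (gadj prox) mu g t -> 0 < wv prox mu g 0 t.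
Proof.
move=> Hv mu g t bt; rewrite lt_def wv_ge0 // andbT; apply/eqP => w0.
have gm : g != mu by move: bt; rewrite branchE => /andP[].
have hc : connect (avoid (gadj prox) mu) t g.
  rewrite (sym_connect_sym (avoid_sym _ _)).
  by move: bt; rewrite branchE => /andP[].
case/connectP: hc => p hp hl.
have HS : forall y, y \in t :: p -> branch (gadj prox) mu g y.
  move=> y hy; rewrite branchE gm /=.
  apply: connect_trans (_ : connect _ g t) (path_connect hp hy).
  by move: bt; rewrite branchE => /andP[].
have H1 : forall t', branch (gadj prox) mu g t' -> 0 <= (wv prox mu g *m Amx N prox) 0 t'.
  move=> t' bt'; rewrite wv_A // (negbTE (branch_neq bt')) mulr0 subr0; exact: ler0n.
have H2 : forall t' z, branch (gadj prox) mu g t' -> Amx N prox z t' != 0 -> 0 <= wv prox mu g 0 z.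
  by move=> t' z _ _; apply: wv_ge0.
have H3 : forall a b, avoid (gadj prox) mu a b -> gadj prox a b by move=> a b /andP[].
have [_ hA] := GP Hv H1 H2 H3 hp HS w0.
move: hA; rewrite -hl wv_A // eqxx (negbTE gm) mulr0 subr0 => /eqP.
by rewrite oner_eq0.
Qed.

Lemma Efinal N prox : valid_prox N prox -> forall x y : 'I_N,
  gadj prox x y -> ~~ connect (rme (gadj prox) x y) x y.
Proof. move=> Hv; exact: (Einv_all Hv (leqnn N)). Qed.

Lemma Tlem N prox : valid_prox N prox -> forall a b c : 'I_N,
  gadj prox a b -> gadj prox a c -> b != c -> ~~ connect (avoid (gadj prox) a) c b.
Proof.
move=> Hv a b c eab eac bc; apply/negP => hc.
have ab : a != b by apply: contraTneq eab => ->; rewrite gadj_irr.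
have h1 : connect (rme (gadj prox) a b) a c.
  apply: connect1; rewrite /rme /= eac eqxx /= (negbTE ab) /= orbF.
  by rewrite eq_sym bc.
have h2 : connect (rme (gadj prox) a b) c b.
  have := @connect_lift _ _ (rme (gadj prox) a b) id _ c b hc; apply.
  move=> u v /andP[euv /andP[ua va]]; apply: connect1.
  by rewrite /rme /= euv (negbTE ua) (negbTE va) /= andbF.
by move: (Efinal Hv eab); rewrite (connect_trans h1 h2).
Qed.

Lemma Ldisj N prox : valid_prox N prox -> forall a b v : 'I_N,
  gadj prox a b -> connect (avoid (gadj prox) a) b v -> connect (avoid (gadj prox) b) a v -> False.
Proof.
move=> Hv a b v eab h1 h2.
have ab : a != b by apply: contraTneq eab => ->; rewrite gadj_irr.
have sub : forall z, (forall u w, avoid (gadj prox) z u w -> rme (gadj prox) a b u w) ->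
    forall x y, connect (avoid (gadj prox) z) x y -> connect (rme (gadj prox) a b) x y.
  move=> z hz x y hc; apply: (@connect_lift _ _ _ id _ x y hc) => u w h.
  by apply: connect1; apply: hz.
have k1 : connect (rme (gadj prox) a b) a v.
  apply: (sub b) h2 => u w /andP[euw /andP[ub wb]].
  by rewrite /rme /= euw (negbTE ub) (negbTE wb) /= !andbF.
have k2 : connect (rme (gadj prox) a b) v b.
  rewrite (sym_connect_sym (avoid_sym _ _)) in h1.
  apply: (sub a) h1 => u w /andP[euw /andP[ua wa]].
  by rewrite /rme /= euw (negbTE ua) (negbTE wa) /= andbF.
by move: (Efinal Hv eab); rewrite (connect_trans k1 k2).
Qed.

Lemma P1 (T : finType) (e : rel T) a x p : path e x p -> (forall u, u \in x :: p -> u != a) ->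
  forall v, v \in x :: p -> connect (avoid e a) x v.
Proof.
move=> hp ha; apply: path_connect.
elim: p x hp ha => [|y p IH] x //= /andP[exy hp] ha.
rewrite /avoid /= exy (ha x) ?(ha y) ?inE ?eqxx ?orbT //=.
by apply: IH => // u hu; apply: ha; rewrite inE hu orbT.
Qed.

Lemma conn_sym_avoid N prox (a x y : 'I_N) :
  connect (avoid (gadj prox) a) x y -> connect (avoid (gadj prox) a) y x.
Proof. by rewrite (sym_connect_sym (avoid_sym _ _)). Qed.

Lemma Sep N prox : valid_prox N prox -> forall (mu g nu : 'I_N) q,
  path (gadj prox) mu q -> last mu q = g -> uniq (mu :: q) ->
  nu \in mu :: q -> nu != mu -> nu != g -> ~~ connect (avoid (gadj prox) nu) mu g.
Proof.
move=> Hv mu g nu q hp hl hu hn nm ng.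
have nq : nu \in q by move: hn; rewrite inE (negbTE nm).
case/splitPr: nq hp hl hu => q1 q2.
rewrite cat_path last_cat => /andP[hp1 hp2'] hl hu; move: hp2' => /= /andP[e1 hp2]; rewrite /= in hl.
case: q2 hp2 hl hu => [|a2 q2] hp2 hl hu; first by move: ng; rewrite /= in hl; rewrite hl eqxx.
move: hp2 => /= /andP[e2 hp2]; rewrite /= in hl.
have := hu; rewrite -cat_cons cat_uniq => /and3P[u1 hdis u2].
have nq1 : nu \notin mu :: q1.
  by apply: contra hdis => h; apply/hasP; exists nu; rewrite ?inE ?eqxx.
have a2q1 : a2 \notin mu :: q1.
  by apply: contra hdis => h; apply/hasP; exists a2; rewrite ?inE ?eqxx ?orbT.
have nq2 : nu \notin a2 :: q2 by move: u2; rewrite /= => /andP[].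
set a1 := last mu q1.
have a1in : a1 \in mu :: q1 by exact: mem_last.
have a12 : a2 != a1 by apply: contraNneq a2q1 => ->.
have c1 : connect (avoid (gadj prox) nu) mu a1.
  apply: P1 hp1 _ _ a1in => u hu'; apply: contraNneq nq1 => <-; exact: hu'.
have c2 : connect (avoid (gadj prox) nu) a2 g.
  apply: P1 hp2 _ _ _; last by rewrite -hl; exact: mem_last.
  by move=> u hu'; apply: contraNneq nq2 => <-.
apply/negP => hc.
have c12 : connect (avoid (gadj prox) nu) a1 a2.
  apply: connect_trans (conn_sym_avoid c1) _.
  exact: connect_trans hc (conn_sym_avoid c2).
have e1' : gadj prox nu a1 by rewrite gadj_sym.
by move: (Tlem Hv e2 e1' a12); rewrite c12.
Qed.

Lemma Hfwd N prox (a a2 v : 'I_N) r : path (gadj prox) a (a2 :: r) -> a \notin a2 :: r ->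
  v \in a2 :: r -> gadj prox a a2 /\ connect (avoid (gadj prox) a) v a2.
Proof.
move=> /= /andP[e2 hp] na hv; split => //.
apply: conn_sym_avoid; apply: P1 hp _ _ hv.
by move=> u hu; apply: contraNneq na => <-.
Qed.

Lemma P2 N prox (x : 'I_N) p : path (gadj prox) x p -> uniq (x :: p) ->
  forall a v, a \in x :: p -> v \in x :: p -> v != a ->
  exists a', [/\ a' \in x :: p, gadj prox a a' & connect (avoid (gadj prox) a) v a'].
Proof.
move=> hp hu a v ha hv va.
case: (eqVneq a x) => [ax|ax].
  subst a; clear ha; case: p hp hu hv => [|a2 r] hp hu hv; first by move: hv va; rewrite inE => /eqP->; rewrite eqxx.
  have vin : v \in a2 :: r by move: hv; rewrite inE (negbTE va).
  have na : x \notin a2 :: r by move: hu; rewrite /= => /andP[].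
  have [e2 c2] := Hfwd hp na vin.
  by exists a2; split => //; rewrite inE inE eqxx orbT.
have ap : a \in p by move: ha; rewrite inE (negbTE ax).
move: hp hu hv; case/splitPr: ap => p1 p2.
rewrite cat_path => /andP[hp1 hp2'] hu hv; move: hp2' => /= /andP[e1 hp2].
have := hu; rewrite -cat_cons cat_uniq => /and3P[u1 hdis u2].
have naq1 : a \notin x :: p1.
  by apply: contra hdis => h; apply/hasP; exists a; rewrite ?inE ?eqxx.
have nap2 : a \notin p2 by move: u2; rewrite /= => /andP[].
move: hv; rewrite -cat_cons mem_cat => /orP[vq1|]; last first.
  rewrite inE (negbTE va) /= => vp2.
  case: p2 hp2 nap2 vp2 {hu u2 hdis} => [|a2 r] // hp2 nap2 vp2.
  have [e2 c2] := Hfwd hp2 nap2 vp2.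
  by exists a2; split => //; rewrite -cat_cons mem_cat !inE eqxx !orbT.
exists (last x p1); split.
- have sub : {subset x :: p1 <= x :: p1 ++ a :: p2}.
    by move=> z; rewrite !inE mem_cat => /orP[->|->]; rewrite ?orbT.
  exact: sub (mem_last _ _).
- by rewrite gadj_sym.
- have hav : forall u, u \in x :: p1 -> u != a.
    by move=> u hu'; apply: contraNneq naq1 => <-.
  apply: connect_trans (conn_sym_avoid (P1 hp1 hav vq1)) (P1 hp1 hav (mem_last _ _)).
Qed.

Lemma reach_refl N (e : rel 'I_N) n x : reach e n x x.
Proof. by case: n => [|n] /=; rewrite eqxx. Qed.

Lemma reach_mono N (e : rel 'I_N) n x y : reach e n x y -> reach e n.+1 x y.
Proof.
elim: n x => [|n IH] x /=; first by move=> ->.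
case/orP=> [->//|/existsP[k /andP[ek hk]]].
by apply/orP; right; apply/existsP; exists k; apply/andP; split => //; exact: (IH _ hk).
Qed.

Lemma path_reach N (e : rel 'I_N) x p y : path e x p -> y \in x :: p -> reach e (size p) x y.
Proof.
elim: p x => [|z p IH] x /=.
  by move=> _; rewrite inE => /eqP->; rewrite eqxx.
move=> /andP[exz hp]; rewrite inE => /orP[/eqP->|hy]; first by rewrite eqxx.
by apply/orP; right; apply/existsP; exists z; rewrite exz IH.
Qed.

Lemma size_uniq_lt N (x : 'I_N) p : uniq (x :: p) -> (size p < N)%N.
Proof.
move=> hu; have e1 := card_uniqP hu.
have := max_card (mem (x :: p)); rewrite card_ord e1 /=; done.
Qed.

Lemma find_iota0 (a : pred nat) n : (0 < n)%N -> a 0%N -> find a (iota 0 n) = 0%N.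
Proof. by case: n => // n _ h /=; rewrite h. Qed.

Lemma gdist_self N (e : rel 'I_N) x : gdist e x x = 0%N.
Proof. by rewrite /gdist find_iota0 ?reach_refl //; apply: leq_ltn_trans (ltn_ord x). Qed.

Lemma gdist_min N (e : rel 'I_N) x y m : (m < gdist e x y)%N -> reach e m x y = false.
Proof.
move=> h; have := before_find 0%N h.
have hm : (m < N)%N by apply: leq_trans h _; rewrite /gdist -[X in (_ <= X)%N](size_iota 0 N) find_size.
by rewrite nth_iota.
Qed.

Lemma gdist_reach N (e : rel 'I_N) x y n : reach e n x y -> (n < N)%N ->
  reach e (gdist e x y) x y.
Proof.
move=> hr hn.
have hh : has (fun k => reach e k x y) (iota 0 N).
  by apply/hasP; exists n; rewrite ?mem_iota.
have := nth_find 0%N hh; rewrite has_find size_iota in hh.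
by rewrite nth_iota.
Qed.

Lemma Lsep N (e : rel 'I_N) z n x y : reach e n x y ->
  (exists m, (m <= n)%N /\ reach e m x z) \/ connect (avoid e z) x y.
Proof.
elim: n x => [|n IH] x /=.
  move=> /eqP <-; case: (eqVneq x z) => [->|xz].
    by left; exists 0%N; rewrite /= eqxx.
  by right.
case/orP=> [/eqP <-|/existsP[k /andP[ek hk]]].
  case: (eqVneq x z) => [->|xz]; last by right.
  by left; exists 0%N; rewrite /= eqxx.
case: (eqVneq x z) => [->|xz]; first by left; exists 0%N; rewrite /= eqxx.
case: (eqVneq k z) => [kz|kz].
  left; exists 1%N; split => //=; apply/orP; right; apply/existsP; exists k.
  by rewrite ek kz eqxx.
case: (IH k hk) => [[m [hm hr]]|hc].
  left; exists m.+1; split => //=; apply/orP; right; apply/existsP; exists k.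
  by rewrite ek hr.
right; apply: connect_trans hc; apply: connect1; by rewrite /avoid /= ek xz kz.
Qed.

Lemma phiE N prox (mu g eta nu : 'I_N) :
  phi (valmx N prox) mu g eta nu = wv prox mu g 0 nu / valmx N prox eta nu.
Proof. by []. Qed.

Lemma phi_ge0 N prox : valid_prox N prox -> forall mu g eta nu : 'I_N,
  0 <= phi (valmx N prox) mu g eta nu.
Proof. by move=> Hv mu g eta nu; rewrite phiE divr_ge0 ?wv_ge0 // ltW // Vpos. Qed.

Lemma uA_lin N prox : valid_prox N prox -> forall (mu g eta : 'I_N) (k : rat) t,
  ((wv prox mu g - k *: row eta (valmx N prox)) *m Amx N prox) 0 t =
  (t == g)%:R - rho (valmx N prox) mu g mu * (t == mu)%:R - k * (eta == t)%:R.
Proof.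
move=> Hv mu g eta k t.
have hB : forall X Y : 'rV[rat]_N, (X - Y) 0 t = X 0 t - Y 0 t by move=> X Y; rewrite !mxE.
have hZ : forall (X : 'rV[rat]_N) k', (k' *: X) 0 t = k' * X 0 t by move=> X k'; rewrite !mxE.
by rewrite mulmxBl -scalemxAl hB hZ wv_A // vrow_A.
Qed.

Lemma u_ent N prox (mu g eta : 'I_N) (k : rat) t :
  (wv prox mu g - k *: row eta (valmx N prox)) 0 t = wv prox mu g 0 t - k * valmx N prox eta t.
Proof. by rewrite !mxE. Qed.

Lemma bdry N prox : valid_prox N prox -> forall (a b t z : 'I_N), a != b ->
  connect (avoid (gadj prox) a) b t -> ~~ connect (avoid (gadj prox) a) b z ->
  Amx N prox z t != 0 -> z = a.
Proof.
move=> Hv a b t z ab ht hz Az.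
have ta : t != a by apply/eqP => ta; rewrite ta in ht; move: ab; rewrite (conn_avoid_end ht) eqxx.
have zt : z != t by apply: contraNneq hz => ->.
have ezt := Amx_nz_adj Hv zt Az.
case: (eqVneq z a) => // za.
move/negP: hz; case; apply: connect_trans ht (connect1 _); by rewrite /avoid /= gadj_sym ezt ta za.
Qed.

Lemma edge_const N prox : valid_prox N prox -> forall (mu g eta a b : 'I_N),
  gadj prox a b ->
  (forall v, connect (avoid (gadj prox) a) b v -> [&& v != mu, v != g & v != eta]) ->
  phi (valmx N prox) mu g eta a = phi (valmx N prox) mu g eta b.
Proof.
move=> Hv mu g eta a b eab HC.
have ab : a != b by apply: contraTneq eab => ->; rewrite gadj_irr.
set k := phi (valmx N prox) mu g eta a.
pose u := wv prox mu g - k *: row eta (valmx N prox).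
have ua : u 0 a = 0.
  by rewrite /u u_ent /k phiE divfK ?subrr // lt0r_neq0 // Vpos.
have H1 : forall t, connect (avoid (gadj prox) a) b t -> (u *m Amx N prox) 0 t = 0.
  move=> t ht; have /and3P[tm tg te] := HC t ht.
  by rewrite /u uA_lin // (negbTE tm) (negbTE tg) eq_sym (negbTE te) /= !mulr0n !mulr0 !subr0.
have H2 : forall t z, connect (avoid (gadj prox) a) b t -> ~~ connect (avoid (gadj prox) a) b z ->
    Amx N prox z t != 0 -> u 0 z = 0.
  move=> t z ht hz Az; by rewrite (bdry Hv ab ht hz Az).
have := UQ Hv H1 H2 (connect0 _ b).
rewrite /u u_ent => /eqP; rewrite subr_eq0 => /eqP hb.
by rewrite phiE hb mulfK // lt0r_neq0 // Vpos.
Qed.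


Lemma mono N prox : valid_prox N prox -> forall (mu g eta nu nu' : 'I_N),
  nu' != mu -> ~~ connect (avoid (gadj prox) nu') mu g ->
  connect (avoid (gadj prox) nu') mu nu ->
  phi (valmx N prox) mu g eta nu < phi (valmx N prox) mu g eta nu'.
Proof.
move=> Hv mu g eta nu nu' nm hg hnu.
set k := phi (valmx N prox) mu g eta nu'.
set c := rho (valmx N prox) mu g mu.
pose u := - (wv prox mu g - k *: row eta (valmx N prox)).
have uE t : u 0 t = k * valmx N prox eta t - wv prox mu g 0 t.
  by rewrite /u mxE u_ent opprB.
have uAE t : (u *m Amx N prox) 0 t =
    k * (eta == t)%:R + c * (t == mu)%:R - (t == g)%:R.
  rewrite /u mulNmx mxE uA_lin //; rewrite -/c; lra.
have mn : mu != nu' by rewrite eq_sym.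
pose D := connect (avoid (gadj prox) nu') mu.
have kge : 0 <= k by apply: phi_ge0.
have cgt : 0 < c by apply: rho_pos.
have H1 : forall t, D t -> 0 <= (u *m Amx N prox) 0 t.
  move=> t Dt; have tg : t != g by apply: contraNneq hg => <-.
  rewrite uAE (negbTE tg) /= mulr0n subr0; apply: addr_ge0; apply: mulr_ge0 => //;
    try exact: ler0n; exact: ltW.
have un' : u 0 nu' = 0 by rewrite uE /k phiE divfK ?subrr // lt0r_neq0 // Vpos.
have H2 : forall t z, D t -> ~~ D z -> Amx N prox z t != 0 -> 0 <= u 0 z.
  by move=> t z Dt Dz Az; rewrite (bdry Hv nm Dt Dz Az) un'.
have uD := MP Hv H1 H2.
have H2' : forall t z, D t -> Amx N prox z t != 0 -> 0 <= u 0 z.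
  move=> t z Dt Az; case Dz: (D z); first exact: uD.
  by rewrite (bdry Hv nm Dt (negbT Dz) Az) un'.
have H3 : forall a b, avoid (gadj prox) nu' a b -> gadj prox a b by move=> a b /andP[].
have : 0 < u 0 nu.
  rewrite lt_def uD // andbT; apply/eqP => u0.
  have := conn_sym_avoid hnu; case/connectP => p hp hl.
  have HS : forall y, y \in nu :: p -> D y.
    by move=> y hy; apply: connect_trans hnu (path_connect hp hy).
  have [_ hA] := GP Hv H1 H2' H3 hp HS u0.
  move: hA; rewrite -hl uAE => hA.
  have mg : mu != g by apply: contraNneq hg => <-; exact: connect0.
  have e1 : ((mu == mu)%:R : rat) = 1 by rewrite eqxx.
  have e2 : ((mu == g)%:R : rat) = 0 by rewrite (negbTE mg).
  have h1 : 0 <= k * (eta == mu)%:R by apply: mulr_ge0 => //; exact: ler0n.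
  rewrite e1 e2 in hA; lra.
rewrite uE subr_gt0 => h.
by rewrite phiE ltr_pdivrMr // Vpos.
Qed.

Lemma chain (N : nat) (F : 'I_N -> rat) (O : 'I_N -> Prop) (r : rel 'I_N) :
  (forall a b, r a b -> ~ (O a /\ O b) -> F a = F b) ->
  forall x p, path r x p -> uniq (x :: p) ->
  (forall u w, u \in x :: p -> w \in x :: p -> O u -> O w -> u = w) ->
  forall y, y \in x :: p -> F y = F x.
Proof.
move=> HE x p; elim: p x => [|z p IH] x /=.
  by move=> _ _ _ y; rewrite inE => /eqP->.
move=> /andP[rxz hp] /andP[xn hu] Hone.
have Fxz : F x = F z.
  apply: (HE _ _ rxz) => -[Ox Oz].
  have hx : x \in x :: z :: p by rewrite inE eqxx.
  have hz : z \in x :: z :: p by rewrite !inE eqxx orTb orbT.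
  have xz := Hone x z hx hz Ox Oz.
  by move: xn; rewrite xz inE eqxx.
move=> y; rewrite inE => /orP[/eqP->//|hy].
rewrite Fxz; apply: IH => //.
by move=> u w hu' hw'; apply: Hone; rewrite inE ?hu' ?hw' orbT.
Qed.

Lemma notP_ok N (mu g eta : 'I_N) q v :
  last mu q = g -> eta \in mu :: q -> v \notin mu :: q -> [&& v != mu, v != g & v != eta].
Proof.
move=> hl he hv; apply/and3P; split.
- by apply: contraNneq hv => ->; rewrite inE eqxx.
- by apply: contraNneq hv => ->; rewrite -hl mem_last.
- by apply: contraNneq hv => ->.
Qed.

Lemma part4_edge N prox : valid_prox N prox -> forall (mu g eta : 'I_N) q,
  path (gadj prox) mu q -> last mu q = g -> uniq (mu :: q) -> eta \in mu :: q ->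
  forall a b, gadj prox a b -> ~ (onpath (gadj prox) mu g a /\ onpath (gadj prox) mu g b) ->
  phi (valmx N prox) mu g eta a = phi (valmx N prox) mu g eta b.
Proof.
move=> Hv mu g eta q hp hl hu he a b eab hno.
have ab : a != b by apply: contraTneq eab => ->; rewrite gadj_irr.
have onP : forall v, v \in mu :: q -> onpath (gadj prox) mu g v.
  by move=> v hv; exists q; rewrite hp hl eqxx hu hv.
have side : forall a b, gadj prox a b -> a \in mu :: q -> b \notin mu :: q ->
    forall v, connect (avoid (gadj prox) a) b v -> v \notin mu :: q.
  move=> a0 b0 e0 a0P b0P v hc; apply/negP => vP.
  have a0b0 : a0 != b0 by apply: contraTneq e0 => ->; rewrite gadj_irr.
  have va : v != a0 by apply/eqP => va; rewrite va in hc; move: a0b0; rewrite (conn_avoid_end hc) eqxx.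
  have [a' [a'P ea' ca']] := P2 hp hu a0P vP va.
  have a'b : a' != b0 by apply: contraNneq b0P => <-.
  by move: (Tlem Hv ea' e0 a'b); rewrite (connect_trans hc ca').
case aP: (a \in mu :: q).
  have bP : b \notin mu :: q by apply/negP => bP; apply: hno; split; apply: onP.
  apply: (edge_const Hv) => // v hv; apply: notP_ok hl he _.
  exact: side eab aP bP v hv.
case bP: (b \in mu :: q).
  have eba : gadj prox b a by rewrite gadj_sym.
  symmetry; apply: (edge_const Hv) => // v hv; apply: notP_ok hl he _.
  by apply: side eba bP _ v hv; rewrite aP.
have allA : forall z, z \notin mu :: q -> forall v, v \in mu :: q -> connect (avoid (gadj prox) z) mu v.
  move=> z zP v vP; apply: P1 hp _ _ vP => u hu'; by apply: contraNneq zP => <-.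
case: (boolP [exists v, (v \in mu :: q) && connect (avoid (gadj prox) a) b v]) => [/existsP[v /andP[vP cv]]|hA].
  have c1 : connect (avoid (gadj prox) a) b mu.
    exact: connect_trans cv (conn_sym_avoid (allA a (negbT aP) v vP)).
  symmetry; apply: (edge_const Hv); first by rewrite gadj_sym.
  move=> v' hv'; apply: notP_ok hl he _; apply/negP => v'P.
  have c2 : connect (avoid (gadj prox) b) a mu.
    exact: connect_trans hv' (conn_sym_avoid (allA b (negbT bP) v' v'P)).
  exact: (@Ldisj _ _ Hv a b mu eab c1 c2).
apply: (edge_const Hv) => // v hv; apply: notP_ok hl he _; apply/negP => vP.
by move/existsP: hA; apply; exists v; rewrite vP hv.
Qed.

Unset Implicit Arguments. Set Strict Implicit.

Theorem mainTheorem11 (N : nat) (prox : nat -> nat -> bool)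
  (Hprox : valid_prox N prox) (mu g eta : 'I_N) :
  let V := @valmx N prox in
  let e := @gadj N prox in
  let f := phi V mu g eta in
  (forall nu, 0 <= f nu) /\
  (forall nu, 0 < f nu <-> branch e mu g nu) /\
  (forall nu nu', onpath e mu g nu -> onpath e mu g nu' ->
     (gdist e mu nu < gdist e mu nu')%N -> f nu < f nu') /\
  (onpath e mu g eta ->
     forall (x : 'I_N) (p : seq 'I_N), path e x p -> uniq (x :: p) ->
       (forall u w, u \in x :: p -> w \in x :: p ->
          onpath e mu g u -> onpath e mu g w -> u = w) ->
       forall a b, a \in x :: p -> b \in x :: p -> f a = f b).
Proof.
move=> V e f; rewrite {}/f {}/V {}/e.
have Hv := Hprox.
split; first by move=> nu; apply: phi_ge0.
split.
  move=> nu; split => [hf|hb].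
    by apply/negPn/negP => nb; move: hf; rewrite phiE wv_off // mul0r ltxx.
  by rewrite phiE divr_gt0 ?wv_pos ?Vpos.
split.
  move=> nu nu' [q /and4P[hp /eqP hl hu hn]] [q' /and4P[hp' /eqP hl' hu' hn']] hd.
  have nm : nu' != mu.
    by apply/eqP => e1; move: hd; rewrite e1 gdist_self.
  have hg : ~~ connect (avoid (gadj prox) nu') mu g.
    case: (eqVneq nu' g) => [ng|ng].
      apply/negP => hc; rewrite -ng in hc; move: nm; by rewrite (conn_avoid_end hc) eqxx.
    exact: (Sep Hv hp' hl' hu' hn' nm ng).
  apply: (@mono N prox Hv mu g eta nu nu' nm hg).
  have hr := path_reach hp hn.
  have hr' := gdist_reach hr (size_uniq_lt hu).
  case: (Lsep nu' hr') => [[m [hm hrm]]|//].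
  have : (m < gdist (gadj prox) mu nu')%N by apply: leq_ltn_trans hm hd.
  by move/gdist_min; rewrite hrm.
move=> [q /and4P[hp /eqP hl hu he]] x p hpx hux Hone a b ha hb.
have HE := part4_edge Hv hp hl hu he.
rewrite (chain HE hpx hux Hone ha) (chain HE hpx hux Hone hb) //.
Qed.
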